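(* In the additive penalized estimation problem described in the context, suppose that for some $1\le j\le p$ the covariate $x^{(j)}$ is a scalar in $[0,1]$ and $\mathcal G_j$ is the bounded variation space $\mathcal V^m$ with $m=1$ or $m=2$ and semi-norm $\|g_j\|_{F,j}=\mathrm{TV}(g_j^{(m-1)})$. Then a minimizer $\hat g=\sum_{k=1}^p\hat g_k$ of $K_n$ (when one exists) can be chosen such that $\hat g_j$ is piecewise constant with jump points only in $\{X_i^{(j)}:i=1,\dots,n\}$ if $m=1$, or $\hat g_j$ is continuous and piecewise linear with break points only in $\{X_i^{(j)}:i=1,\dots,n\}$ if $m=2$.
   Context: Data $(Y_i,X_i)$, $i=1,\dots,n$. For $k=1,\dots,p$, $x^{(k)}$ is a sub-vector of coordinates of $x$, $\mathcal G_k$ is a vector space of functions of $x^{(k)}$ with semi-norm $\|\cdot\|_{F,k}$, $\mathcal G=\{\sum_kg_k(x^{(k)}):g_k\in\mathcal G_k\}$. $\|f\|_n^2=n^{-1}\sum_if(X_i)^2$, $\|Y-g\|_n^2=n^{-1}\sum_i\{Y_i-g(X_i)\}^2$. With positive constants $\rho_{nk},\lambda_{nk}$ and $A_0>1$, $K_n(g)=\|Y-g\|_n^2/2+A_0\sum_{k=1}^p(\rho_{nk}\|g_k\|_{F,k}+\lambda_{nk}\|g_k\|_n)$, minimized over $g\in\mathcal G$ and decompositions $g=\sum_kg_k$. Total variation: $\mathrm{TV}(f)=\sup\sum_{i=1}^k|f(z_i)-f(z_{i-1})|$ over partitions $0\le z_0<\dots<z_k\le1$. $\mathcal V^m$ is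 the set of $g:[0,1]\to\mathbb R$ such that $g^{(m-2)}$ is absolutely continuous if $m\ge2$ and $\|g\|_{L_1}+\mathrm{TV}(g^{(m-1)})<\infty$. *)

(* Defs.v *)
From HB Require Import structures.
From mathcomp Require Import all_boot all_order all_algebra.
From mathcomp Require Import all_classical all_reals all_analysis.
Set Implicit Arguments. Unset Strict Implicit. Unset Printing Implicit Defensive.
Import Order.TTheory GRing.Theory Num.Theory numFieldNormedType.Exports.
Local Open Scope classical_set_scope.
Local Open Scope ring_scope.

Section Defs.
Variable R : realType.

Definition coord_dep (d : nat) (I : {set 'I_d}) (g : ('I_d -> R) -> R) :=
  forall x y : 'I_d -> R, (forall c, c \in I -> x c = y c) -> g x = g y.

(* the univariate function t |-> g(t,...,t); when g depends only on the
   coordinate c, g x = univ g (x c) *)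
Definition univ (d : nat) (g : ('I_d -> R) -> R) : R -> R := fun t => g (fun _ => t).

Definition abs_cont01 (f : R -> R) :=
  forall e : R, 0 < e -> exists2 del : R, 0 < del &
    forall (K : nat) (a b : 'I_K -> R),
      (forall k, 0 <= a k /\ a k <= b k /\ b k <= 1) ->
      (forall k l, k != l -> b k <= a l \/ b l <= a k) ->
      \sum_(k < K) (b k - a k) < del ->
      \sum_(k < K) `|f (b k) - f (a k)| < e.

Definition deriv_version (f h : R -> R) :=
  forall x : R, 0 <= x <= 1 ->
    ((f x)%:E = (f 0)%:E + \int[@lebesgue_measure R]_(t in `[0%R, x]) (h t)%:E)%E.

(* TV(f') on [0,1]: the total variation of the derivative, taken over the
   versions of the a.e.-defined derivative (essential variation) *)
Definition TV_deriv (f : R -> R) : \bar R :=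
  ereal_inf [set total_variation 0 1 h | h in [set h | deriv_version f h]].

Definition L1_01 (f : R -> R) :=
  (@lebesgue_measure R).-integrable `[(0:R), 1] (EFin \o f).

Definition Vspace (m : nat) (f : R -> R) : Prop :=
  match m with
  | 1 => L1_01 f /\ (total_variation 0 1 f < +oo)%E
  | 2 => abs_cont01 f /\ L1_01 f /\ (TV_deriv f < +oo)%E
  | _ => False
  end.

Definition TVpen (m : nat) (f : R -> R) : R :=
  match m with
  | 1 => fine (total_variation 0 1 f)
  | 2 => fine (TV_deriv f)
  | _ => 0
  end.

Definition Gbv (d : nat) (c : 'I_d) (m : nat) : set (('I_d -> R) -> R) :=
  [set g | coord_dep [set c]%SET g /\ Vspace m (univ g)].

Definition emp_norm (n d : nat) (Xs : 'I_n -> 'I_d -> R) (f : ('I_d -> R) -> R) : R :=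
  Num.sqrt (n%:R^-1 * \sum_(i < n) (f (Xs i)) ^+ 2).

Definition emp_loss (n d : nat) (Y : 'I_n -> R) (Xs : 'I_n -> 'I_d -> R)
  (g : ('I_d -> R) -> R) : R :=
  n%:R^-1 * \sum_(i < n) (Y i - g (Xs i)) ^+ 2.

Definition Kn (n d p : nat) (Y : 'I_n -> R) (Xs : 'I_n -> 'I_d -> R)
  (N : 'I_p -> (('I_d -> R) -> R) -> R) (rho lam : 'I_p -> R) (A0 : R)
  (gt : 'I_p -> ('I_d -> R) -> R) : R :=
  emp_loss Y Xs (fun x => \sum_(k < p) gt k x) / 2
  + A0 * \sum_(k < p) (rho k * N k (gt k) + lam k * emp_norm Xs (gt k)).

Definition is_minimizer (n d p : nat) (Y : 'I_n -> R) (Xs : 'I_n -> 'I_d -> R)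
  (G : 'I_p -> set (('I_d -> R) -> R))
  (N : 'I_p -> (('I_d -> R) -> R) -> R) (rho lam : 'I_p -> R) (A0 : R)
  (gt : 'I_p -> ('I_d -> R) -> R) : Prop :=
  (forall k, G k (gt k)) /\
  forall gt' : 'I_p -> ('I_d -> R) -> R, (forall k, G k (gt' k)) ->
    Kn Y Xs N rho lam A0 gt <= Kn Y Xs N rho lam A0 gt'.

Definition pw_constant (S : set R) (f : R -> R) :=
  forall x y : R, 0 <= x <= 1 -> 0 <= y <= 1 ->
    (forall s, S s -> ~ (Num.min x y <= s <= Num.max x y)) -> f x = f y.

Definition pw_linear (S : set R) (f : R -> R) :=
  {within `[(0:R), 1], continuous f} /\
  forall a b : R, 0 <= a -> a <= b -> b <= 1 ->
    (forall s, S s -> ~ (a < s < b)) ->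
    exists c e : R, forall x, a <= x <= b -> f x = c + e * x.

Definition pw_shape (m : nat) (S : set R) (f : R -> R) : Prop :=
  match m with
  | 1 => pw_constant S f
  | 2 => pw_linear S f
  | _ => False
  end.

End Defs.

(* Main.v *)
Require Import Defs.
From HB Require Import structures.
From mathcomp Require Import all_boot all_order all_algebra.
From mathcomp Require Import all_classical all_reals all_analysis.
From mathcomp Require Import measurable_realfun.
From mathcomp Require Import ring lra.
Set Implicit Arguments. Unset Strict Implicit. Unset Printing Implicit Defensive.
Import Order.TTheory GRing.Theory Num.Theory numFieldNormedType.Exports.
Local Open Scope classical_set_scope.
Local Open Scope ring_scope.

Section TVlemmas.
Context {R : realType}.
Implicit Types (a b u v : R) (f g : R -> R).

Lemma variation_eq a b f g s : {in `[a, b], f =1 g} -> itv_partition a b s ->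
  variation a b f s = variation a b g s.
Proof.
move=> fg abs; rewrite /variation; apply: eq_big_nat => k /andP[_ ks] /=.
have h m : (m < (size s).+1)%N -> f (nth b (a :: s) m) = g (nth b (a :: s) m).
  move=> ms; apply: fg; rewrite in_itv /=.
  by rewrite (itv_partition_nth_ge ms abs) (itv_partition_nth_le ms abs).
have := h k.+1 ks; rewrite /= => ->; rewrite h // ltnS ltnW //.
Qed.

Lemma TV_eq a b f g : {in `[a, b], f =1 g} ->
  total_variation a b f = total_variation a b g.
Proof.
move=> fg; rewrite /total_variation; congr ereal_sup.
apply/seteqP; split => _ [_ [s abs <-] <-].
  exists (variation a b g s); first exact: variations_variation.
  by rewrite (variation_eq fg).
exists (variation a b f s); first exact: variations_variation.
by rewrite (variation_eq fg).
Qed.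

Lemma TV_step u b f c0 : u < b -> (forall t, u <= t < b -> f t = c0) ->
  total_variation u b f = (`|f b - c0|)%:E.
Proof.
move=> ub fc.
have fu : f u = c0 by apply: fc; rewrite lexx ub.
have [le|lt] := leP c0 (f b).
  rewrite nondecreasing_total_variation ?ltW // ?fu ?ger0_norm ?subr_ge0 //.
  move=> x y; rewrite !in_itv /= => /andP[ux xb] /andP[uy yb] xy.
  have [yb'|] := ltP y b.
    by rewrite !fc ?ux ?uy ?yb' ?(le_lt_trans xy yb').
  move=> by_; have -> : y = b by apply/le_anti; rewrite yb by_.
  have [xb'|] := ltP x b; first by rewrite fc ?ux ?xb'.
  by move=> bx; have -> : x = b by apply/le_anti; rewrite xb bx.
rewrite -total_variationN nondecreasing_total_variation ?ltW //.
  by rewrite /= fu ltr0_norm ?subr_lt0 // opprB opprK addrC.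
move=> x y; rewrite !in_itv /= => /andP[ux xb] /andP[uy yb] xy.
rewrite lerN2.
have [yb'|] := ltP y b.
  by rewrite !fc ?ux ?uy ?yb' ?(le_lt_trans xy yb').
move=> by_; have -> : y = b by apply/le_anti; rewrite yb by_.
have [xb'|] := ltP x b; first by rewrite (fc x) ?ux ?xb' // ltW.
by move=> bx; have -> : x = b by apply/le_anti; rewrite xb bx.
Qed.

Lemma TV_const u v f c0 : u <= v -> (forall t, u <= t <= v -> f t = c0) ->
  total_variation u v f = 0%E.
Proof.
move=> uv fc; rewrite nondecreasing_total_variation //.
  by rewrite !fc ?lexx ?uv // subrr.
move=> x y; rewrite !in_itv /= => xi yi _; by rewrite !fc.
Qed.

End TVlemmas.

Section Paths.
Context {R : realType}.

Lemma path_head_lt (a : R) s z : path <%R a s -> z \in s -> a < z.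
Proof.
move=> p zs; have := order_path_min (@lt_trans _ R) p.
by move/allP => /(_ z zs).
Qed.

Lemma path_le_last (a : R) s z : path <%R a s -> z \in a :: s -> z <= last a s.
Proof.
elim: s a z => [a z _|b s IH a z /= /andP[ab p]]; first by rewrite inE => /eqP ->.
rewrite inE => /orP[/eqP ->|zs]; last exact: IH.
by apply: ltW; apply: (@lt_le_trans _ _ b) => //; apply: IH; rewrite ?inE ?eqxx.
Qed.

Lemma path_ge_head (a : R) s z : path <%R a s -> z \in a :: s -> a <= z.
Proof.
move=> p; rewrite inE => /orP[/eqP ->//|zs]; exact/ltW/(path_head_lt p).
Qed.

End Paths.

Section Step.
Context {R : realType}.
Variable g : R -> R.
Local Notation TV := total_variation.

Fixpoint st (a : R) (s : seq R) (t : R) : R :=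
  match s with [::] => g a | b :: s' => if t < b then g a else st b s' t end.

Lemma st_pt a s t : path <%R a s -> t \in a :: s -> st a s t = g t.
Proof.
elim: s a => [a _|b s IH a /= /andP[ab p]]; first by rewrite inE => /eqP ->.
rewrite inE => /orP[/eqP ->|]; first by rewrite ab.
move=> ts; have bt : b <= t by apply: (path_ge_head p ts).
by rewrite ltNge bt /= IH.
Qed.

Lemma st_pwc a s x y : path <%R a s -> x <= y ->
  (forall z, z \in s -> ~ (x <= z <= y)) -> st a s x = st a s y.
Proof.
elim: s a => [//|b s IH a /= /andP[ab p]] xy nz.
have [yb|by_] := ltP y b; first by rewrite (le_lt_trans xy yb).
have bx : b < x.
  rewrite ltNge; apply/negP => xb; apply: (nz b); rewrite ?inE ?eqxx //.
  by rewrite xb by_.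
rewrite ltNge (ltW bx) /=.
by apply: IH => // z zs; apply: nz; rewrite inE zs orbT.
Qed.

Lemma st_TV a s u v : path <%R a s -> u <= a -> last a s <= v ->
  (TV u v (st a s) <= TV a (last a s) g)%E.
Proof.
elim: s a u => [a u _ ua av /=|b s IH a u /= /andP[ab p] ua lv].
  by rewrite (@TV_const _ u v _ (g a)) ?total_variationxx // (le_trans ua).
have bv : b <= v by apply: le_trans lv; apply: path_le_last p _; rewrite inE eqxx.
have ub : u < b by apply: le_lt_trans ab.
rewrite (total_variationD _ (ltW ub) bv).
rewrite (@total_variationD _ a (last b s) b) ?(ltW ab) //; last first.
  by apply: path_le_last p _; rewrite inE eqxx.
apply: leeD.
  rewrite (@TV_step _ u b _ (g a)) //; last by move=> t /andP[_ ->].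
  by rewrite ltxx st_pt ?inE ?eqxx // total_variation_ge // ltW.
rewrite (@TV_eq _ b v _ (st b s)); first exact: IH.
by move=> t; rewrite in_itv /= => /andP[bt _]; rewrite ltNge bt.
Qed.

Lemma st_bound a s t : `|st a s t| <= \sum_(x <- a :: s) `|g x|.
Proof.
elim: s a => [a|b s IH a] /=; first by rewrite big_seq1.
rewrite big_cons; case: ifP => _.
  by rewrite lerDl sumr_ge0.
by rewrite (le_trans (IH b)) // lerDr.
Qed.

Lemma st_measurable a s : measurable_fun setT (st a s).
Proof.
elim: s a => [a|b s IH a] /=; first exact: measurable_cst.
apply: measurable_fun_ifT => //.
  by apply: measurable_fun_ltr => //; exact: measurable_cst.
Qed.

End Step.

Section IntSplit.
Context {R : realType}.
Local Notation mu := (@lebesgue_measure R).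

Lemma int_split (f : R -> R) u b v : u <= b -> b <= v ->
  measurable_fun setT f ->
  (\int[mu]_(t in `[u, v[) (f t)%:E =
   \int[mu]_(t in `[u, b[) (f t)%:E + \int[mu]_(t in `[b, v[) (f t)%:E)%E.
Proof.
move=> ub bv mf.
rewrite (@itv_bndbnd_setU _ _ _ (BLeft b)) ?bnd_simp //.
rewrite integral_setU //.
- apply/measurable_EFinP; apply: measurable_funS mf => //.
- apply/disj_setPS => x [] /=; rewrite !in_itv /= => /andP[_ xb] /andP[bx _].
  by move: (lt_le_trans xb bx); rewrite ltxx.
Qed.

Lemma int_const (f : R -> R) u v c : u <= v -> (forall t, u <= t < v -> f t = c) ->
  (\int[mu]_(t in `[u, v[) (f t)%:E = (c * (v - u))%:E)%E.
Proof.
move=> uv fc.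
rewrite (eq_integral (cst c%:E)); last first.
  by move=> t; rewrite inE /= in_itv /= => /fc ->.
rewrite integral_cst // [X in (_ * X)%E]lebesgue_measure_itv /= lte_fin.
have [uv'|] := ltP u v; first by rewrite -EFinD -EFinM.
move=> vu; have -> : v = u by apply/le_anti; rewrite uv vu.
by rewrite subrr mulr0 mule0.
Qed.

End IntSplit.

Section Lin.
Context {R : realType}.
Variable g : R -> R.
Local Notation mu := (@lebesgue_measure R).
Local Notation TV := total_variation.

Definition sl (a b : R) := (g b - g a) / (b - a).
Definition lin (a b t : R) := g a + sl a b * (t - a).

Fixpoint li (a : R) (s : seq R) (t : R) : R :=
  match s with
  | [::] => g a
  | b :: s' => if s' is _ :: _ then (if t < b then lin a b t else li b s' t)
               else lin a b t
  end.

Fixpoint hs (a : R) (s : seq R) (t : R) : R :=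
  match s with
  | [::] => 0
  | b :: s' => if s' is _ :: _ then (if t < b then sl a b else hs b s' t)
               else sl a b
  end.

Fixpoint Lc (a : R) (s : seq R) : R :=
  match s with [::] => 0 | b :: s' => `|sl a b| + Lc b s' end.

Fixpoint Dv (a : R) (s : seq R) : R :=
  match s with
  | [::] => 0
  | b :: s' => if s' is c :: _ then `|sl b c - sl a b| + Dv b s' else 0
  end.

Lemma lin_a a b : lin a b a = g a.
Proof. by rewrite /lin subrr mulr0 addr0. Qed.

Lemma lin_b a b : a < b -> lin a b b = g b.
Proof.
move=> ab; rewrite /lin /sl divfK ?subr_eq0 ?gt_eqF //.
by rewrite addrC subrK.
Qed.

Lemma linB a b x y : lin a b y - lin a b x = sl a b * (y - x).
Proof. by rewrite /lin; ring. Qed.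

Lemma Lc_ge0 a s : 0 <= Lc a s.
Proof. by elim: s a => [//|b s IH a] /=; rewrite addr_ge0. Qed.

Lemma li_pt a s t : path <%R a s -> t \in a :: s -> li a s t = g t.
Proof.
elim: s a => [a _|b s' IH a pth]; first by rewrite inE => /eqP ->.
case: s' IH pth => [|c s] IH pth.
  move: pth => /andP[ab _].
  by rewrite !inE => /orP[/eqP ->|/eqP ->]; rewrite /= ?lin_a ?lin_b.
have ab : a < b by case/andP: pth.
have p : path <%R b (c :: s) by case/andP: pth.
rewrite in_cons => /orP[/eqP ->|ts].
  by rewrite /= ab lin_a.
have bt : b <= t by apply: (path_ge_head p ts).
by rewrite /= ltNge bt /= -/(li b (c :: s) t) IH.
Qed.

Lemma li_left a b s t : path <%R a (b :: s) -> t <= b -> li a (b :: s) t = lin a b t.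
Proof.
case: s => [//|c s] pth tb.
have ab : a < b by case/andP: pth.
have [tb'|bt] := ltP t b; first by rewrite /= tb'.
have -> : t = b by apply/le_anti; rewrite tb bt.
by rewrite (li_pt pth) ?inE ?eqxx ?orbT // lin_b.
Qed.

Lemma li_right a b c s t : path <%R a (b :: c :: s) -> b <= t ->
  li a (b :: c :: s) t = li b (c :: s) t.
Proof. by move=> _ bt /=; rewrite ltNge bt. Qed.

Lemma li_lip a s x y : path <%R a s -> x <= y ->
  `|li a s y - li a s x| <= Lc a s * (y - x).
Proof.
elim: s a x y => [a x y _ xy|b s' IH a x y pth xy].
  by rewrite /= subrr normr0 mul0r.
have yx0 : 0 <= y - x by rewrite subr_ge0.
case: s' IH pth => [|c s] IH pth.
  by rewrite /= linB normrM addr0 (ger0_norm yx0).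
have ab : a < b by case/andP: pth.
have p : path <%R b (c :: s) by case/andP: pth.
have Lc0 := Lc_ge0 b (c :: s).
have L t : t <= b -> li a (b :: c :: s) t = lin a b t by exact: li_left.
have Rt t : b <= t -> li a (b :: c :: s) t = li b (c :: s) t by exact: li_right.
have -> : Lc a [:: b, c & s] = `|sl a b| + Lc b (c :: s) by [].
have [yb|by_] := leP y b.
  rewrite !L ?(le_trans xy yb) // linB normrM (ger0_norm yx0).
  by rewrite ler_wpM2r // lerDl.
have [bx|xb] := leP b x.
  rewrite !Rt ?(le_trans bx xy) //; apply: (le_trans (IH _ _ _ p xy)).
  by rewrite ler_wpM2r // lerDr.
have e : li a (b :: c :: s) y - li a (b :: c :: s) x =
  (li b (c :: s) y - li b (c :: s) b) + (lin a b b - lin a b x).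
  by rewrite Rt ?(ltW by_) // L ?(ltW xb) // (@li_pt b _ b p) ?inE ?eqxx // lin_b //; ring.
rewrite e (le_trans (ler_normD _ _)) //.
have h1 := IH _ _ _ p (ltW by_).
have h2 : `|lin a b b - lin a b x| = `|sl a b| * (b - x).
  by rewrite linB normrM (@ger0_norm _ (b - x)) // subr_ge0 ltW.
rewrite h2; apply: (le_trans (lerD h1 (lexx _))).
have : 0 <= `|sl a b| by [].
move: (Lc b (c :: s)) (`|sl a b|) Lc0 => L1 L2 L10 L20.
nra.
Qed.

Lemma li_lin a s u v : path <%R a s -> u <= v ->
  (forall z, z \in s -> ~ (u < z < v)) ->
  exists c e : R, forall x, u <= x <= v -> li a s x = c + e * x.
Proof.
elim: s a => [a _ uv nz|b s' IH a pth uv nz].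
  by exists (g a), 0 => x _; rewrite mul0r addr0.
case: s' IH pth nz => [|c s] IH pth nz.
  by exists (g a - sl a b * a), (sl a b) => x _; rewrite /= /lin; ring.
have ab : a < b by case/andP: pth.
have p : path <%R b (c :: s) by case/andP: pth.
have [vb|bv] := leP v b.
  exists (g a - sl a b * a), (sl a b) => x /andP[ux xv].
  by rewrite li_left ?(le_trans xv vb) // /lin; ring.
have [bu|ub] := leP b u.
  have [c' [e' H]] := IH b p uv (fun z zs => nz z (mem_behead (s:=[:: b, c & s]) zs)).
  exists c', e' => x /andP[ux xv]; rewrite li_right ?(le_trans bu ux) //.
  by apply: H; rewrite ux xv.
by exfalso; apply: (nz b); rewrite ?inE ?eqxx // ub bv.
Qed.

Lemma hs_meas a s : measurable_fun setT (hs a s).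
Proof.
elim: s a => [a|b s' IH a] /=; first exact: measurable_cst.
case: s' IH => [|c s] IH; first exact: measurable_cst.
apply: measurable_fun_ifT => //.
- by apply: measurable_fun_ltr => //; exact: measurable_cst.
Qed.

Lemma hs_left a b s t : t < b -> hs a (b :: s) t = sl a b.
Proof. by case: s => [//|c s] /= ->. Qed.

Lemma hs_right a b c s t : b <= t -> hs a (b :: c :: s) t = hs b (c :: s) t.
Proof. by move=> bt /=; rewrite ltNge bt. Qed.

Lemma hs_int a s u v : path <%R a s -> u <= v ->
  (\int[mu]_(t in `[u, v[) (hs a s t)%:E = (li a s v - li a s u)%:E)%E.
Proof.
elim: s a u v => [a u v _ uv|b s' IH a u v pth uv].
  by rewrite (@int_const _ _ _ _ 0) // mul0r /= subrr.
case: s' IH pth => [|c s] IH pth.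
  by rewrite (@int_const _ _ _ _ (sl a b)) //= linB.
have ab : a < b by case/andP: pth.
have p : path <%R b (c :: s) by case/andP: pth.
have case1 u' v' : u' <= v' -> v' <= b ->
    (\int[mu]_(t in `[u', v'[) (hs a (b :: c :: s) t)%:E =
     (li a (b :: c :: s) v' - li a (b :: c :: s) u')%:E)%E.
  move=> uv' vb; rewrite (@int_const _ _ _ _ (sl a b)) //; last first.
    by move=> t /andP[_ tv]; rewrite hs_left // (lt_le_trans tv vb).
  by rewrite !li_left ?(le_trans uv' vb) // linB.
have case2 u' v' : b <= u' -> u' <= v' ->
    (\int[mu]_(t in `[u', v'[) (hs a (b :: c :: s) t)%:E =
     (li a (b :: c :: s) v' - li a (b :: c :: s) u')%:E)%E.
  move=> bu uv'.
  transitivity (\int[mu]_(t in `[u', v'[) (hs b (c :: s) t)%:E)%E.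
    apply: eq_integral => t tin.
    have /andP[ut _] : u' <= t < v' by move: tin; rewrite inE /= in_itv.
    by rewrite hs_right // (le_trans bu ut).
  by rewrite IH // !li_right // (le_trans bu uv').
have [vb|bv] := leP v b; first exact: case1.
have [bu|ub] := leP b u; first exact: case2.
rewrite (@int_split _ _ u b v) ?(ltW ub) ?(ltW bv) //; last exact: hs_meas.
by rewrite case1 ?case2 ?(ltW ub) ?(ltW bv) // -EFinD; congr EFin; ring.
Qed.

Lemma Dv_ge0 a s : 0 <= Dv a s.
Proof.
elim: s a => [//|b s IH a] /=; case: s IH => [//|c s] IH.
by rewrite addr_ge0.
Qed.

Lemma hs_TV a s u v : path <%R a s -> u <= v ->
  (TV u v (hs a s) <= (Dv a s)%:E)%E.
Proof.
elim: s a u v => [a u v _ uv|b s' IH a u v pth uv].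
  by rewrite (@TV_const _ u v _ 0).
case: s' IH pth => [|c s] IH pth.
  by rewrite (@TV_const _ u v _ (sl a b)).
have ab : a < b by case/andP: pth.
have p : path <%R b (c :: s) by case/andP: pth.
have bc : b < c by case/andP: p.
have -> : Dv a [:: b, c & s] = `|sl b c - sl a b| + Dv b (c :: s) by [].
have D0 := Dv_ge0 b (c :: s).
have [vb|bv] := ltP v b.
  rewrite (@TV_const _ u v _ (sl a b)) // ?lee_fin ?addr_ge0 //.
  by move=> t /andP[_ tv]; rewrite hs_left // (le_lt_trans tv vb).
have [bu|ub] := leP b u.
  rewrite (@TV_eq _ u v _ (hs b (c :: s))); last first.
    by move=> t; rewrite in_itv => /andP[ut _]; rewrite hs_right // (le_trans bu ut).
  by apply: (le_trans (IH _ _ _ p uv)); rewrite lee_fin lerDr.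
rewrite (total_variationD _ (ltW ub) bv) EFinD; apply: leeD.
  rewrite (@TV_step _ u b _ (sl a b)) //; last first.
    by move=> t /andP[_ tb]; rewrite hs_left.
  by rewrite hs_right // hs_left.
rewrite (@TV_eq _ b v _ (hs b (c :: s))); first exact: IH.
by move=> t; rewrite in_itv => /andP[bt _]; rewrite hs_right.
Qed.

End Lin.

Section Integ.
Context {R : realType}.
Local Notation mu := (@lebesgue_measure R).

Lemma bnd_integrable (f : R -> R) (D : set R) (M : R) : measurable D ->
  (mu D < +oo)%E -> measurable_fun D f -> (forall t, D t -> `|f t| <= M) ->
  mu.-integrable D (EFin \o f).
Proof.
move=> mD Dfin mf fM; apply: measurable_bounded_integrable => //.
exists M; split; first exact: num_real.
by move=> N MN t Dt; apply: le_trans (fM t Dt) (ltW MN).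
Qed.

Definition clamp01 (t : R) := if t < 0 then 0 else if 1 < t then 1 else t.

Lemma clamp01_id t : 0 <= t <= 1 -> clamp01 t = t.
Proof.
case/andP=> t0 t1; rewrite /clamp01.
by rewrite ltNge t0 /= ltNge t1.
Qed.

Lemma clamp01_in t : 0 <= clamp01 t <= 1.
Proof.
rewrite /clamp01; case: ltP => [_|t0]; first by rewrite lexx ler01.
by case: ltP => [_|t1]; rewrite ?lexx ?ler01 ?t0 ?t1.
Qed.

Lemma clamp01_nd : nondecreasing_fun clamp01.
Proof.
move=> x y xy; rewrite /clamp01.
case: (ltP x 0) => x0; case: (ltP y 0) => y0 //.
- by case: ltP => // _; rewrite ler01.
- by have := lt_le_trans (le_lt_trans xy y0) x0; rewrite ltxx.
case: (ltP 1 x) => x1; case: (ltP 1 y) => y1 //.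
by have := lt_le_trans (lt_le_trans x1 xy) y1; rewrite ltxx.
Qed.

Definition nd01 (f : R -> R) :=
  forall s t, 0 <= s -> s <= t -> t <= 1 -> f s <= f t.

Lemma nd01_meas f : nd01 f -> measurable_fun (`[0, 1] : set R) f.
Proof.
move=> nf.
apply: (@eq_measurable_fun _ _ _ _ _ (f \o clamp01)).
  by move=> t; rewrite inE /= in_itv /= => t01; rewrite /= clamp01_id.
apply: nondecreasing_measurable => // x y xy /=.
have /andP[x0 x1] := clamp01_in x; have /andP[y0 y1] := clamp01_in y.
by apply: nf => //; apply: clamp01_nd.
Qed.

Lemma nd01_bound f t : nd01 f -> 0 <= t <= 1 -> `|f t| <= `|f 0| + `|f 1|.
Proof.
move=> nf /andP[t0 t1].
have h1 := nf 0 t (lexx _) t0 t1; have h2 := nf t 1 t0 t1 (lexx _).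
have a1 := ler_norm (f 1); have a0 := ler_norm (- f 0).
rewrite normrN in a0.
have b0 := normr_ge0 (f 0); have b1 := normr_ge0 (f 1).
rewrite ler_norml; apply/andP; split; lra.
Qed.

Lemma Rint_const (f : R -> R) u v c : u <= v -> (forall t, u <= t < v -> f t = c) ->
  \int[mu]_(t in `[u, v[) f t = c * (v - u).
Proof. by move=> uv fc; rewrite /Rintegral (int_const uv fc). Qed.

Lemma nd01_integrable f (D : set R) : nd01 f -> measurable D -> D `<=` `[0, 1] ->
  mu.-integrable D (EFin \o f).
Proof.
move=> nf mD D01; apply: (@bnd_integrable _ _ (`|f 0| + `|f 1|)) => //.
- apply: (@le_lt_trans _ _ (mu `[0%R, 1%R]%classic)).
    by apply: le_measure => //; rewrite inE.
  by rewrite [X in (X < _)%E]lebesgue_measure_itv /= lte_fin ltr01 -EFinD ltry.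
- exact: measurable_funS (nd01_meas nf).
- by move=> t /D01; rewrite /= in_itv /= => t01; apply: nd01_bound.
Qed.

Lemma sub01 (a b : R) : 0 <= a -> b <= 1 -> `[a, b[ `<=` (`[0, 1] : set R).
Proof.
move=> a0 b1 t /=; rewrite !in_itv /= => /andP[at' tb].
by rewrite (le_trans (ltW tb) b1) (le_trans a0 at').
Qed.

Lemma avg_le f a b : nd01 f -> 0 <= a -> a <= b -> b <= 1 ->
  \int[mu]_(t in `[a, b[) f t <= f b * (b - a).
Proof.
move=> nf a0 ab b1; rewrite -(@Rint_const (fun _ => f b) a b) //.
apply: le_Rintegral => //.
- by apply: nd01_integrable => //; exact: sub01.
- by apply: nd01_integrable => //; exact: sub01.
move=> t /=; rewrite in_itv /= => /andP[at' tb]; apply: nf => //.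
  exact: le_trans a0 at'.
exact: ltW.
Qed.

Lemma avg_ge f a b : nd01 f -> 0 <= a -> a <= b -> b <= 1 ->
  f a * (b - a) <= \int[mu]_(t in `[a, b[) f t.
Proof.
move=> nf a0 ab b1; rewrite -(@Rint_const (fun _ => f a) a b) //.
apply: le_Rintegral => //.
- by apply: nd01_integrable => //; exact: sub01.
- by apply: nd01_integrable => //; exact: sub01.
move=> t /=; rewrite in_itv /= => /andP[at' tb]; apply: nf => //.
exact: le_trans (ltW tb) b1.
Qed.

End Integ.

Section DvLe.
Context {R : realType}.
Local Notation mu := (@lebesgue_measure R).
Local Notation TV := total_variation.
Variables (g h : R -> R).
Hypothesis Hdv : deriv_version g h.
Hypothesis Hfin : (TV 0 1 h < +oo)%E.

Let V t := fine (TV 0 t h).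

Let TV01fin : TV 0 1 h \is a fin_num.
Proof. by rewrite ge0_fin_numE // total_variation_ge0 // ler01. Qed.

Let TVfin x y : 0 <= x -> x <= y -> y <= 1 -> TV x y h \is a fin_num.
Proof.
move=> x0 xy y1.
have := TV01fin; rewrite (total_variationD _ x0 (le_trans xy y1)).
rewrite (total_variationD _ xy y1).
by rewrite !fin_numD => /andP[_ /andP[]].
Qed.

Let Vdiff x y : 0 <= x -> x <= y -> y <= 1 -> V y - V x = fine (TV x y h).
Proof.
move=> x0 xy y1; rewrite /V (total_variationD _ x0 xy) fineD.
- by rewrite addrC addKr.
- by apply: TVfin => //; exact: le_trans xy y1.
- exact: TVfin.
Qed.

Let Vh x y : 0 <= x -> x <= y -> y <= 1 -> `|h y - h x| <= V y - V x.
Proof.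
move=> x0 xy y1; rewrite Vdiff // -lee_fin fineK ?TVfin //.
exact: total_variation_ge.
Qed.

Let V0 t : 0 <= t -> 0 <= V t.
Proof. by move=> t0; rewrite /V fine_ge0 // total_variation_ge0. Qed.

Let P t := V t + h t.
Let N t := V t - h t.

Let ndV : nd01 V.
Proof.
move=> x y x0 xy y1; rewrite -subr_ge0 Vdiff // fine_ge0 //.
exact: total_variation_ge0.
Qed.

Let ndP : nd01 P.
Proof.
move=> x y x0 xy y1; rewrite -subr_ge0.
have := Vh x0 xy y1; rewrite /P.
move: (V x) (V y) (h x) (h y) => a b c d; rewrite ler_norml => /andP[].
lra.
Qed.

Let ndN : nd01 N.
Proof.
move=> x y x0 xy y1; rewrite -subr_ge0.
have := Vh x0 xy y1; rewrite /N.
move: (V x) (V y) (h x) (h y) => a b c d; rewrite ler_norml => /andP[].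
lra.
Qed.

Let h_int (D : set R) : measurable D -> D `<=` `[0, 1] ->
  mu.-integrable D (EFin \o h).
Proof.
move=> mD D01.
apply: (@bnd_integrable _ _ _ ((`|P 0| + `|P 1|) + (`|V 0| + `|V 1|))) => //.
- apply: (@le_lt_trans _ _ (mu `[0%R, 1%R]%classic)).
    by apply: le_measure => //; rewrite inE.
  by rewrite [X in (X < _)%E]lebesgue_measure_itv /= lte_fin ltr01 -EFinD ltry.
- apply: (@eq_measurable_fun _ _ _ _ _ (fun t => P t - V t)).
    by move=> t _; rewrite /P addrC addKr.
  apply: measurable_funB; apply: measurable_funS (nd01_meas _) => //.
- move=> t /D01; rewrite /= in_itv /= => t01.
  have -> : h t = P t - V t by rewrite /P addrC addKr.
  apply: (le_trans (ler_normB _ _)); apply: lerD; exact: nd01_bound.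
Qed.

Let gRint x : 0 <= x <= 1 -> g x = g 0 + \int[mu]_(t in `[0, x]) h t.
Proof.
move=> /andP[x0 x1]; have := Hdv (x:=x); rewrite x0 x1 => /(_ isT).
rewrite -[X in (_ + X)%E]fineK; last first.
  apply: integrable_fin_num => //; apply: h_int => //.
  by move=> t /=; rewrite !in_itv /= => /andP[-> /le_trans]; apply.
by rewrite -EFinD => -[].
Qed.

Let gdiff x y : 0 <= x -> x <= y -> y <= 1 ->
  g y - g x = \int[mu]_(t in `[x, y[) h t.
Proof.
move=> x0 xy y1.
rewrite (gRint (x:=y)) ?(le_trans x0 xy) ?y1 // (gRint (x:=x)) ?x0 ?(le_trans xy y1) //.
rewrite opprD addrACA subrr add0r.
have s1 : `[0, y] `<=` `[0, 1].
  by move=> t /=; rewrite !in_itv /= => /andP[-> ty]; rewrite (le_trans ty y1).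
have s2 : `]x, y] `<=` `[0, 1].
  move=> t /=; rewrite !in_itv /= => /andP[xt ty].
  by rewrite (le_trans ty y1) (le_trans x0 (ltW xt)).
have s3 : `[x, y[ `<=` `[0, 1].
  move=> t /=; rewrite !in_itv /= => /andP[xt ty].
  by rewrite (le_trans (ltW ty) y1) (le_trans x0 xt).
rewrite (@Rintegral_itvB _ _ (BLeft 0) (BRight y) x) ?bnd_simp //; last first.
  exact: h_int.
rewrite Rintegral_itv_obnd_cbnd; last exact: h_int.
by rewrite -Rintegral_itv_bndo_bndc //; exact: h_int.
Qed.

Let Q a b := (\int[mu]_(t in `[a, b[) V t) / (b - a).

Let Q_le a b : 0 <= a -> a < b -> b <= 1 -> Q a b <= V b.
Proof.
move=> a0 ab b1; rewrite /Q ler_pdivrMr ?subr_gt0 //.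
by apply: avg_le => //; exact: ltW.
Qed.

Let Q_ge0 a b : 0 <= a -> a < b -> b <= 1 -> 0 <= Q a b.
Proof.
move=> a0 ab b1; rewrite /Q divr_ge0 ?subr_ge0 ?(ltW ab) //.
apply: Rintegral_ge0 => t /=; rewrite in_itv /= => /andP[at' _].
exact/V0/(le_trans a0 at').
Qed.

Let key a b c : 0 <= a -> a < b -> b < c -> c <= 1 ->
  `|sl g b c - sl g a b| <= Q b c - Q a b.
Proof.
move=> a0 ab bc c1.
have b0 : 0 <= b by apply: le_trans a0 (ltW ab).
have b1 : b <= 1 by apply: le_trans (ltW bc) c1.
have iV x y : 0 <= x -> y <= 1 -> mu.-integrable `[x, y[ (EFin \o V).
  by move=> x0 y1; apply: nd01_integrable => //; exact: sub01.
have ih x y : 0 <= x -> y <= 1 -> mu.-integrable `[x, y[ (EFin \o h).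
  by move=> x0 y1; apply: h_int => //; exact: sub01.
have slE x y : x < y -> g y - g x = sl g x y * (y - x).
  by move=> xy; rewrite /sl divfK // subr_eq0 gt_eqF.
have QE x y : x < y -> \int[mu]_(t in `[x, y[) V t = Q x y * (y - x).
  by move=> xy; rewrite /Q divfK // subr_eq0 gt_eqF.
have PE x y : 0 <= x -> x < y -> y <= 1 -> \int[mu]_(t in `[x, y[) P t =
    Q x y * (y - x) + sl g x y * (y - x).
  move=> x0 xy y1.
  by rewrite /P RintegralD // ?iV ?ih // -gdiff ?(ltW xy) // QE // slE.
have NE x y : 0 <= x -> x < y -> y <= 1 -> \int[mu]_(t in `[x, y[) N t =
    Q x y * (y - x) - sl g x y * (y - x).
  move=> x0 xy y1.
  by rewrite /N RintegralB // ?iV ?ih // -gdiff ?(ltW xy) // QE // slE.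
have h1 := avg_le ndP a0 (ltW ab) b1.
have h2 := avg_ge ndP b0 (ltW bc) c1.
have h3 := avg_le ndN a0 (ltW ab) b1.
have h4 := avg_ge ndN b0 (ltW bc) c1.
rewrite PE // in h1; rewrite PE // in h2; rewrite NE // in h3; rewrite NE // in h4.
move: h1 h2 h3 h4; rewrite /P /N.
have d1 : 0 < b - a by rewrite subr_gt0.
have d2 : 0 < c - b by rewrite subr_gt0.
move: (Q a b) (Q b c) (sl g a b) (sl g b c) (V b) (h b) (b - a) (c - b) d1 d2.
move=> q1 q2 s1 s2 vb hb e1 e2 d1 d2 h1 h2 h3 h4.
have k1 : q1 + s1 <= vb + hb by rewrite -(ler_pM2r d1); lra.
have k2 : vb + hb <= q2 + s2 by rewrite -(ler_pM2r d2); lra.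
have k3 : q1 - s1 <= vb - hb by rewrite -(ler_pM2r d1); lra.
have k4 : vb - hb <= q2 - s2 by rewrite -(ler_pM2r d2); lra.
rewrite ler_norml; apply/andP; split; lra.
Qed.

Let claim a b s : path <%R a (b :: s) -> 0 <= a -> last b s <= 1 ->
  Dv g a (b :: s) + Q a b <= V (last b s).
Proof.
elim: s a b => [a b pth a0 b1|c s IH a b pth a0 l1].
  have ab : a < b by case/andP: pth.
  by rewrite /= add0r; apply: Q_le.
have ab : a < b by case/andP: pth.
have p : path <%R b (c :: s) by case/andP: pth.
have bc : b < c by case/andP: p.
have c1 : c <= 1.
  by apply: le_trans l1; apply: (@path_le_last _ b (c :: s)) => //; rewrite !inE eqxx orbT.
have b0 : 0 <= b by apply: le_trans a0 (ltW ab).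
have -> : Dv g a [:: b, c & s] = `|sl g b c - sl g a b| + Dv g b (c :: s) by [].
have := IH b c p b0 l1; have := key a0 ab bc c1.
move: (Dv g b (c :: s)) (Q a b) (Q b c) (`|_|) => x y z w; lra.
Qed.

Lemma Dv_le a s : path <%R a s -> 0 <= a -> last a s <= 1 ->
  Dv g a s <= fine (TV 0 1 h).
Proof.
case: s => [_ a0 _|b s pth a0 l1]; first by rewrite fine_ge0 // total_variation_ge0 // ler01.
have ab : a < b by case/andP: pth.
have := claim pth a0 l1.
have bl : b <= 1.
  by apply: le_trans l1; apply: (@path_le_last _ a (b :: s)) => //; rewrite !inE eqxx orbT.
have q0 := Q_ge0 a0 ab bl.
have lb0 : 0 <= last b s.
  apply: le_trans a0 _; apply: (@path_le_last _ a (b :: s)) => //.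
  by rewrite inE eqxx.
have := ndV lb0 l1 (lexx 1).
rewrite /V; lra.
Qed.

End DvLe.

Section Cont.
Context {R : realType}.

Lemma lip_cont (f : R -> R) L : 0 <= L ->
  (forall x y, x <= y -> `|f y - f x| <= L * (y - x)) -> continuous f.
Proof.
move=> L0 fL x; apply/cvgrPdist_le => e e0.
apply/nbhs_ballP; exists (e / (L + 1)) => /=.
  by rewrite divr_gt0 // ltr_wpDl.
move=> t xt; have {}xt : `|x - t| < e / (L + 1) by move: xt; rewrite /ball /=.
have H : `|f x - f t| <= L * `|x - t|.
  have [xt'|tx] := leP x t.
    rewrite distrC (distrC x t) (ger0_norm (x:=t - x)) ?subr_ge0 //; exact: fL.
  rewrite (ger0_norm (x:=x - t)) ?subr_ge0 ?(ltW tx) //; apply: fL; exact: ltW.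
apply: (le_trans H).
have : `|x - t| * (L + 1) < e by rewrite -ltr_pdivlMr // ltr_wpDl.
have := normr_ge0 (x - t).
move: (`|x - t|) => d d0 hd; nra.
Qed.

End Cont.

Section Assemble.
Context {R : realType}.
Local Notation mu := (@lebesgue_measure R).
Local Notation TV := total_variation.
Variable g : R -> R.
Variables (a : R) (s : seq R).
Hypothesis Hp : path <%R a s.
Hypothesis Ha : 0 <= a.
Hypothesis Hl : last a s <= 1.

Let TV_deriv_ge0 (f : R -> R) : (0 <= TV_deriv f)%E.
Proof.
apply: le_ereal_inf_tmp => _ [h _ <-]; exact/total_variation_ge0/ler01.
Qed.

Lemma li_V2 : Vspace 2 g ->
  Vspace 2 (li g a s) /\ TVpen 2 (li g a s) <= TVpen 2 g.
Proof.
move=> [_ [_ Hg]].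
have lip := li_lip g Hp.
have L0 := Lc_ge0 g a s.
set L := Lc g a s in lip L0.
have Hup : (TV_deriv (li g a s) <= (Dv g a s)%:E)%E.
  apply: ge_ereal_inf; exists (TV 0 1 (hs g a s)); last exact/hs_TV/ler01.
  exists (hs g a s) => //.
  move=> x /andP[x0 x1].
  rewrite -integral_itv_bndo_bndc; last first.
    by apply/measurable_EFinP; apply: measurable_funS (hs_meas g a s).
  by rewrite hs_int // -EFinD; congr EFin; ring.
have Hlow : ((Dv g a s)%:E <= TV_deriv g)%E.
  apply: le_ereal_inf_tmp => _ [h hdv <-].
  have [Hf|] := ltP (TV 0 1 h) +oo%E; last by rewrite leye_eq => /eqP ->; exact: leey.
  rewrite -(@fineK _ (TV 0 1 h)) ?lee_fin; first exact: Dv_le.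
  by rewrite ge0_fin_numE // total_variation_ge0 // ler01.
split; last first.
  rewrite /TVpen; apply: fine_le.
  - by rewrite ge0_fin_numE // (le_lt_trans Hup) // ltry.
  - by rewrite ge0_fin_numE.
  - exact: le_trans Hup Hlow.
split; [|split]; last by rewrite (le_lt_trans Hup) // ltry.
- move=> e e0; exists (e / (L + 1)); first by rewrite divr_gt0 // ltr_wpDl.
  move=> K a' b' H01 _ Hsum.
  apply: (@le_lt_trans _ _ (L * \sum_(k < K) (b' k - a' k))).
    rewrite mulr_sumr; apply: ler_sum => k _.
    by apply: lip; have [_ [-> _]] := H01 k.
  have S0 : 0 <= \sum_(k < K) (b' k - a' k).
    by apply: sumr_ge0 => k _; have [_ [? _]] := H01 k; rewrite subr_ge0.
  move: Hsum; rewrite ltr_pdivlMr ?ltr_wpDl //.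
  move: (\sum_(k < K) (b' k - a' k)) S0 => X X0 HX; nra.
- rewrite /L1_01.
  apply: (@bnd_integrable _ _ _ (`|li g a s 0| + L)) => //.
  + by rewrite [X in (X < _)%E]lebesgue_measure_itv /= lte_fin ltr01 -EFinD ltry.
  + apply: measurable_funS (continuous_measurable_fun _) => //.
    exact: (lip_cont L0 lip).
  + move=> t; rewrite /= in_itv /= => /andP[t0 t1].
    have := lip _ _ t0; rewrite subr0 => h2.
    have h1 := ler_normD (li g a s 0) (li g a s t - li g a s 0).
    rewrite addrC subrK in h1.
    apply: (le_trans h1); rewrite lerD2l (le_trans h2) //.
    by rewrite -{2}(mulr1 L) ler_wpM2l.
Qed.

Lemma st_V1 : Vspace 1 g ->
  Vspace 1 (st g a s) /\ TVpen 1 (st g a s) <= TVpen 1 g.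
Proof.
move=> [_ Hg].
have Hst := st_TV g Hp Ha Hl.
have al : a <= last a s by apply: path_le_last Hp _; rewrite mem_head.
have Hgl : (TV a (last a s) g <= TV 0 1 g)%E.
  rewrite (total_variationD _ Ha (le_trans al Hl)) (total_variationD _ al Hl).
  rewrite addeC -addeA leeDl // adde_ge0 // total_variation_ge0 //.
have Hle := le_trans Hst Hgl.
have st0 : (0 <= TV 0 1 (st g a s))%E by exact/total_variation_ge0/ler01.
split; last first.
  rewrite /TVpen; apply: fine_le => //.
  - by rewrite ge0_fin_numE // (le_lt_trans Hle).
  - by rewrite ge0_fin_numE // (le_trans st0 Hle).
split; last exact: le_lt_trans Hle Hg.
rewrite /L1_01.
apply: (@bnd_integrable _ _ _ (\sum_(x <- a :: s) `|g x|)) => //.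
- by rewrite [X in (X < _)%E]lebesgue_measure_itv /= lte_fin ltr01 -EFinD ltry.
- exact: measurable_funS (st_measurable g a s).
- by move=> t _; exact: st_bound.
Qed.

Lemma st_shape (S : set R) : (forall z, z \in s -> S z) ->
  pw_constant S (st g a s).
Proof.
move=> HS x y _ _ nS.
have [xy|yx] := leP x y.
  apply: st_pwc => // z zs; move: (nS z (HS z zs)).
  by rewrite (min_l xy) (max_r xy).
apply/esym; apply: st_pwc => //; first exact: ltW.
move=> z zs; move: (nS z (HS z zs)).
by rewrite (min_r (ltW yx)) (max_l (ltW yx)).
Qed.

Lemma li_shape (S : set R) : (forall z, z \in s -> S z) ->
  pw_linear S (li g a s).
Proof.
move=> HS; split.
  apply: continuous_subspaceT; apply: (lip_cont (Lc_ge0 g a s)).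
  by move=> x y; exact: li_lip.
move=> u v u0 uv v1 nS; apply: li_lin => // z zs; exact: nS (HS z zs).
Qed.

End Assemble.

Unset Implicit Arguments. Set Strict Implicit.


Theorem proposition2 (R : realType) (n d p : nat)
  (Y : 'I_n -> R) (Xs : 'I_n -> 'I_d -> R)
  (I : 'I_p -> {set 'I_d})
  (G : 'I_p -> set (('I_d -> R) -> R))
  (N : 'I_p -> (('I_d -> R) -> R) -> R)
  (rho lam : 'I_p -> R) (A0 : R) (j : 'I_p) (c : 'I_d) (m : nat) :
  (forall k, 0 < rho k) -> (forall k, 0 < lam k) -> 1 < A0 ->
  (* for k <> j: G_k is a vector space of functions of x^(k), N_k a semi-norm *)
  (forall k, k != j ->
     [/\ G k (fun _ => 0),
         (forall g h, G k g -> G k h -> G k (fun x => g x + h x)),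
         (forall a g, G k g -> G k (fun x => a * g x))
       & (forall g, G k g -> coord_dep (I k) g)] /\
     [/\ (forall a g, G k g -> N k (fun x => a * g x) = `|a| * N k g),
         (forall g, G k g -> 0 <= N k g)
       & (forall g h, G k g -> G k h ->
            N k (fun x => g x + h x) <= N k g + N k h)]) ->
  (* the j-th covariate is the scalar coordinate c, with values in [0,1] *)
  I j = [set c]%SET ->
  (forall i, 0 <= Xs i c <= 1) ->
  (m = 1%N \/ m = 2%N) ->
  G j = Gbv c m ->
  N j = (fun g => TVpen m (univ g)) ->
  (exists gt, is_minimizer Y Xs G N rho lam A0 gt) ->
  exists gt, is_minimizer Y Xs G N rho lam A0 gt /\
    pw_shape m [set Xs i c | i in [set: 'I_n]] (univ (gt j)).
Proof.
move=> rho0 lam0 A01 _ _ Xs01 Hm Gj Nj [gt [Gt Hmin]].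
set S := [set Xs i c | i in [set: 'I_n]].
set g := univ (gt j).
have : Gbv c m (gt j) by rewrite -Gj.
move=> [Gcd GV].
have gtE x : gt j x = g (x c).
  by apply: Gcd => c'; rewrite inE => /eqP ->.
pose xs := sort <=%R (undup [seq Xs i c | i <- enum 'I_n]).
have xsS z : z \in xs -> S z.
  by rewrite mem_sort mem_undup => /mapP[i _ ->]; exists i.
have xsD i : Xs i c \in xs.
  by rewrite mem_sort mem_undup; apply: map_f; rewrite mem_enum.
have xsU : sorted <%R xs by rewrite sort_lt_sorted undup_uniq.
have [a [s [Hp Ha Hl HS Hdat]]] : exists a s, [/\ path <%R a s, 0 <= a,
    last a s <= 1, (forall z, z \in s -> S z) & (forall i, Xs i c \in a :: s)].
  case E : xs xsU xsS xsD => [|a s] xsU xsS xsD.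
    by exists 0, [::]; split => // i; have := xsD i.
  have xs01 z : z \in a :: s -> 0 <= z <= 1.
    by move/xsS => [i _ <-]; exact: Xs01.
  exists a, s; split => //.
  - by have /andP[] := xs01 a (mem_head _ _).
  - have /andP[] // := xs01 (last a s) (mem_last _ _).
  - by move=> z zs; apply: xsS; rewrite inE zs orbT.
pose gt2 (F : R -> R) := fun k => if k == j then (fun x : 'I_d -> R => F (x c)) else gt k.
have glue F : G j (fun x => F (x c)) -> (forall i, F (Xs i c) = g (Xs i c)) ->
    N j (fun x => F (x c)) <= N j (gt j) ->
    is_minimizer Y Xs G N rho lam A0 (gt2 F).
  move=> GF FD NF; split.
    by move=> k; rewrite /gt2; case: eqP => [->|_] //; exact: Gt.
  move=> gt' Gt'; apply: le_trans (Hmin gt' Gt').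
  have Hval k i : gt2 F k (Xs i) = gt k (Xs i).
    by rewrite /gt2; case: eqP => [->|_] //; rewrite FD gtE.
  rewrite /Kn.
  have -> : emp_loss Y Xs (fun x => \sum_(k < p) gt2 F k x) =
            emp_loss Y Xs (fun x => \sum_(k < p) gt k x).
    rewrite /emp_loss; congr (_ * _); apply: eq_bigr => i _.
    by congr ((_ - _) ^+ 2); apply: eq_bigr => k _; exact: Hval.
  rewrite lerD2l ler_wpM2l ?(le_trans ler01 (ltW A01)) //.
  apply: ler_sum => k _.
  have -> : emp_norm Xs (gt2 F k) = emp_norm Xs (gt k).
    rewrite /emp_norm; congr Num.sqrt; congr (_ * _).
    by apply: eq_bigr => i _; rewrite Hval.
  rewrite lerD2r /gt2; case: eqP => [->|_] //.
  by rewrite ler_wpM2l // ltW.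
have cdF (F : R -> R) : coord_dep [set c]%SET (fun x : 'I_d -> R => F (x c)).
  by move=> x y Hxy; rewrite /= Hxy // inE.
case: Hm => Em; subst m.
  have [V1 TV1] := st_V1 (g:=g) Hp Ha Hl GV.
  exists (gt2 (st g a s)); split.
    apply: glue.
    - by rewrite Gj; split; [exact: cdF|exact: V1].
    - by move=> i; exact: st_pt Hp (Hdat i).
    - by rewrite Nj; exact: TV1.
  by rewrite /gt2 eqxx; exact: st_shape.
have [V2 TV2] := li_V2 (g:=g) Hp Ha Hl GV.
exists (gt2 (li g a s)); split.
  apply: glue.
  - by rewrite Gj; split; [exact: cdF|exact: V2].
  - by move=> i; exact: li_pt Hp (Hdat i).
  - by rewrite Nj; exact: TV2.
by rewrite /gt2 eqxx; exact: li_shape.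
Qed.
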